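(* Let $\mathcal{A}\subseteq\mathcal{B}$ be sub-$\sigma$-algebras of a complete probability space $(\Omega,\mathcal{F},P)$. If $M:L^+_\infty(\mathcal{B})\to L^+_\infty(\mathcal{A})$ is a weak $\mathcal{A}$-homogeneous, regular, monotone, sublinear operator, then $M$ is $\mathcal{A}$-homogeneous.
   Context: Weak $\mathcal{A}$-homogeneous: $M(1_AX)=1_AM(X)$ for all $A\in\mathcal{A}$, $X\in L^+_\infty(\mathcal{B})$. $\mathcal{A}$-homogeneous: $M(fX)=fM(X)$ for all $f\in L^+_\infty(\mathcal{A})$. Regular: $X_n\downarrow0$ a.s. implies $M(X_n)\to0$ a.s. Sublinear: $M(X+Y)\le M(X)+M(Y)$, $M(\lambda X)=\lambda M(X)$ for real $\lambda\ge0$. Monotone: $X\ge Y\Rightarrow M(X)\ge M(Y)$. *)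

(* Defs.v *)
From HB Require Import structures.
From mathcomp Require Import all_boot all_order all_algebra.
From mathcomp Require Import all_classical all_reals all_analysis.
Set Implicit Arguments. Unset Strict Implicit. Unset Printing Implicit Defensive.
Import Order.TTheory GRing.Theory Num.Theory.
Local Open Scope classical_set_scope.
Local Open Scope ring_scope.

Definition subsigma_alg d (T : measurableType d) (G : set (set T)) :=
  sigma_algebra setT G /\ G `<=` measurable.

Definition G_measurable d (T : measurableType d) (R : realType)
  (G : set (set T)) (f : T -> R) :=
  forall Y : set R, measurable Y -> G (f @^-1` Y).

(* f is a (representative of an element of) L^+_infty(G): G-measurable,
   nonnegative and bounded. *)
Definition Linf_pos d (T : measurableType d) (R : realType)
  (G : set (set T)) (f : T -> R) :=
  [/\ G_measurable G f, (forall x, 0 <= f x) & exists c : R, forall x, f x <= c].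

Definition indic_set {T} {R : realType} (S : set T) : T -> R :=
  fun x => if `[< S x >] then 1 else 0.

(* Main.v *)
Require Import Defs.
From HB Require Import structures.
From mathcomp Require Import all_boot all_order all_algebra.
From mathcomp Require Import all_classical all_reals all_analysis.
From mathcomp Require Import lra.
Import Order.TTheory GRing.Theory Num.Theory.
Local Open Scope classical_set_scope.
Local Open Scope ring_scope.

Set Implicit Arguments. Unset Strict Implicit.
Section helpers.
Context (d : measure_display) (T : measurableType d) (R : realType).

Lemma Gmeas_equiv {G : set (set T)} (sG : sigma_algebra setT G) (f : T -> R) :
  G_measurable G f <-> measurable_fun (setT : set (g_sigma_algebraType G)) f.
Proof.
have E := measurable_g_measurableTypeE sG.
split.
- move=> h _ Y mY; rewrite setTI; rewrite E; exact: h.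
- move=> h Y mY; have := h (measurableT) Y mY; rewrite setTI E; exact.
Qed.

Lemma Linf_mul (G : set (set T)) (sG : sigma_algebra setT G) (f g : T -> R) :
  Linf_pos G f -> Linf_pos G g -> Linf_pos G (fun y => f y * g y).
Proof.
move=> [mf f0 [c1 hc1]] [mg g0 [c2 hc2]]; split.
- apply: (proj2 (Gmeas_equiv sG _)).
  apply: (@measurable_realfun.measurable_funM _ (g_sigma_algebraType G)).
  + exact: (proj1 (Gmeas_equiv sG _)).
  + exact: (proj1 (Gmeas_equiv sG _)).
- by move=> x; rewrite mulr_ge0.
- by exists (c1 * c2) => x; rewrite ler_pM.
Qed.

Lemma Linf_cst (G : set (set T)) (sG : sigma_algebra setT G) (l : R) :
  0 <= l -> Linf_pos G (fun _ => l).
Proof.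
move=> l0; split => //; last by exists l.
apply: (proj2 (Gmeas_equiv sG _)); exact: measurable_cst.
Qed.

Lemma Linf_indic (G : set (set T)) (sG : sigma_algebra setT G) (S : set T) :
  G S -> Linf_pos G (indic_set S : T -> R).
Proof.
move=> GS; split; last first.
- by exists 1 => x; rewrite /indic_set; case: asboolP.
- by move=> x; rewrite /indic_set; case: asboolP.
apply: (proj2 (Gmeas_equiv sG _)).
have -> : (indic_set S : T -> R) = \1_S.
  apply/funext => x; rewrite /indic_set indicE; case: asboolP => h.
    by rewrite mem_set.
  by rewrite memNset.
apply: (@measurable_realfun.measurable_indic _ (g_sigma_algebraType G)).
by rewrite /measurable /= (sigma_algebra_id sG).
Qed.

Lemma Linf_sub (G G' : set (set T)) (f : T -> R) :
  G `<=` G' -> Linf_pos G f -> Linf_pos G' f.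
Proof. by move=> GG [mf f0 fb]; split => // Y mY; apply: GG; exact: mf. Qed.

Lemma ae_and (mu : {measure set T -> \bar R}) (Q1 Q2 : T -> Prop) :
  {ae mu, forall x, Q1 x} -> {ae mu, forall x, Q2 x} ->
  {ae mu, forall x, Q1 x /\ Q2 x}.
Proof. by move=> h1 h2; apply: filterS2 h1 h2. Qed.

End helpers.

Theorem lemma3p6 (d : measure_display) (T : measurableType d) (R : realType)
  (P : probability T R) (A B : set (set T)) (M : (T -> R) -> (T -> R)) :
  measure_is_complete P ->
  subsigma_alg A -> subsigma_alg B -> A `<=` B ->
  (* M : L^+_oo(B) -> L^+_oo(A) *)
  (forall X, Linf_pos B X -> Linf_pos A (M X)) ->
  (* M is well defined on a.s.-equivalence classes *)
  (forall X Y, Linf_pos B X -> Linf_pos B Y ->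
     {ae P, forall x, X x = Y x} -> {ae P, forall x, M X x = M Y x}) ->
  (* weak A-homogeneity *)
  (forall S X, A S -> Linf_pos B X ->
     {ae P, forall x, M (fun y => indic_set S y * X y) x = indic_set S x * M X x}) ->
  (* regularity *)
  (forall Xn : nat -> T -> R, (forall n, Linf_pos B (Xn n)) ->
     {ae P, forall x, (forall n, Xn n.+1 x <= Xn n x) /\ (Xn n x @[n --> \oo] --> 0)} ->
     {ae P, forall x, M (Xn n) x @[n --> \oo] --> 0}) ->
  (* monotonicity *)
  (forall X Y, Linf_pos B X -> Linf_pos B Y ->
     {ae P, forall x, Y x <= X x} -> {ae P, forall x, M Y x <= M X x}) ->
  (* sublinearity *)
  (forall X Y, Linf_pos B X -> Linf_pos B Y ->
     {ae P, forall x, M (fun y => X y + Y y) x <= M X x + M Y x}) ->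
  (forall (l : R) X, 0 <= l -> Linf_pos B X ->
     {ae P, forall x, M (fun y => l * X y) x = l * M X x}) ->
  (* conclusion: A-homogeneity *)
  forall f X, Linf_pos A f -> Linf_pos B X ->
    {ae P, forall x, M (fun y => f y * X y) x = f x * M X x}.
Proof.
move=> _ [sA _] [sB _] AB MLinf _ whom _ mono _ homog f X fA XB.
have fB := Linf_sub AB fA.
have fXB : Linf_pos B (fun y => f y * X y) := Linf_mul sB fB XB.
have claim : forall n k : nat,
  {ae P, forall x, (f @^-1` `[k%:R / n.+1%:R, k.+1%:R / n.+1%:R[) x ->
     k%:R / n.+1%:R * M X x <= M (fun y => f y * X y) x <= k.+1%:R / n.+1%:R * M X x}.
  move=> n k.
  set a := k%:R / n.+1%:R; set b := k.+1%:R / n.+1%:R.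
  set S := f @^-1` `[a, b[.
  have a0 : 0 <= a by rewrite /a divr_ge0.
  have b0 : 0 <= b by rewrite /b divr_ge0.
  have AS : A S by case: fA => mfA _ _; apply: mfA; exact: measurable_itv.
  have IB := @Linf_indic _ _ R _ sB _ (AB _ AS).
  have X'B : Linf_pos B (fun y => indic_set S y * X y) := Linf_mul sB IB XB.
  have H1 := whom S _ AS fXB.
  have H2 := whom S X AS XB.
  have H3 : {ae P, forall x, M (fun y => a * (indic_set S y * X y)) x
      = a * M (fun y => indic_set S y * X y) x} := homog _ _ a0 X'B.
  have H4 : {ae P, forall x, M (fun y => b * (indic_set S y * X y)) x
      = b * M (fun y => indic_set S y * X y) x} := homog _ _ b0 X'B.
  have X0 : forall y, 0 <= X y by case: XB.
  have H5 := mono (fun y => indic_set S y * (f y * X y))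
    (fun y => a * (indic_set S y * X y)) (Linf_mul sB IB fXB)
    (Linf_mul sB (Linf_cst sB a0) X'B).
  have H6 := mono (fun y => b * (indic_set S y * X y))
    (fun y => indic_set S y * (f y * X y))
    (Linf_mul sB (Linf_cst sB b0) X'B) (Linf_mul sB IB fXB).
  have {}H5 : {ae P, forall x, M (fun y => a * (indic_set S y * X y)) x
      <= M (fun y => indic_set S y * (f y * X y)) x}.
    apply: H5; apply: aeW => y; rewrite /indic_set; case: asboolP => Sy.
      rewrite mulrA mul1r mul1r mulrC [f y * _]mulrC ler_wpM2l //.
      by move: Sy; rewrite /S /= in_itv /= => /andP[].
    by rewrite !mul0r mulr0.
  have {}H6 : {ae P, forall x, M (fun y => indic_set S y * (f y * X y)) x
      <= M (fun y => b * (indic_set S y * X y)) x}.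
    apply: H6; apply: aeW => y; rewrite /indic_set; case: asboolP => Sy.
      rewrite mul1r mul1r [f y * _]mulrC [b * _]mulrC ler_wpM2l //.
      by move: Sy; rewrite /S /= in_itv /= => /andP[_ /ltW].
    by rewrite !mul0r mulr0.
  have := ae_and (ae_and H1 H2) (ae_and (ae_and H3 H4) (ae_and H5 H6)).
  apply: filterS => x [[e1 e2] [[e3 e4] [e5 e6]]] Sx.
  have hS : indic_set S x = 1 :> R by rewrite /indic_set; case: asboolP.
  rewrite hS mul1r in e1; rewrite hS mul1r in e2.
  rewrite e3 e2 e1 in e5; rewrite e4 e2 e1 in e6.
  by rewrite e5 e6.
have all := ae_foralln (fun n => ae_foralln (fun k => claim n k)).
apply: filterS all => x hx.
have m0 : 0 <= M X x by case: (MLinf X XB) => _ + _; apply.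
have f0 : 0 <= f x by case: fA => _ + _; apply.
set m := M X x; set g := M (fun y => f y * X y) x.
have key : forall n : nat, `|g - f x * m| * n.+1%:R <= m.
  move=> n.
  have N0 : 0 < n.+1%:R :> R by rewrite ltr0n.
  set k := Num.truncn (f x * n.+1%:R).
  have /andP[hk1 hk2] := truncn_itv (mulr_ge0 f0 (ltW N0)).
  have ha : k%:R / n.+1%:R <= f x by rewrite ler_pdivrMr.
  have hb : f x < k.+1%:R / n.+1%:R by rewrite ltr_pdivlMr.
  have /andP[g1 g2] : k%:R / n.+1%:R * m <= g <= k.+1%:R / n.+1%:R * m.
    by apply: hx; rewrite /= in_itv /= ha hb.
  have fm1 : k%:R / n.+1%:R * m <= f x * m by rewrite ler_wpM2r.
  have fm2 : f x * m <= k.+1%:R / n.+1%:R * m by rewrite ler_wpM2r // ltW.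
  have diff : k.+1%:R / n.+1%:R * m - k%:R / n.+1%:R * m = m / n.+1%:R.
    by rewrite -!mulrBl -natrB ?leqnSn // subSnn mul1r mulrC.
  have : `|g - f x * m| <= k.+1%:R / n.+1%:R * m - k%:R / n.+1%:R * m.
    rewrite ler_norml.
    move: g1 g2 fm1 fm2.
    generalize (k%:R / n.+1%:R * m) (k.+1%:R / n.+1%:R * m) (f x * m) g.
    move=> u v z g' h1 h2 h3 h4; apply/andP; split; lra.
  by rewrite diff -ler_pdivlMr.
apply/eqP; rewrite -subr_eq0 -normr_eq0; apply/negPn/negP => hne.
have dpos : 0 < `|g - f x * m| by rewrite lt_neqAle eq_sym hne normr_ge0.
have := key (Num.truncn (m / `|g - f x * m|)).
have := truncnS_gt (m / `|g - f x * m|).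
rewrite ltr_pdivrMr // => h1 h2.
by rewrite mulrC in h1; have := lt_le_trans h1 h2; rewrite ltxx.
Qed.
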